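(* Let $0<q<1$, $\alpha>-1$ and let $n\ge0$ be an integer. Then \[ \det\left((q^{\alpha+1};q)_{j+k}\,q^{-\binom{j+k+1}{2}-\alpha(j+k)}\right)_{j,k=0}^{n}=\frac{\prod_{m=0}^{n}(q;q)_m\,(q^{\alpha+1};q)_m}{q^{\,n(n+1)(4n+6\alpha+5)/6}} . \]
   Context: For a complex $a$ and $0<q<1$, $(a;q)_\infty=\prod_{i=0}^\infty(1-aq^i)$ and $(a;q)_m=(a;q)_\infty/(aq^m;q)_\infty=\prod_{i=0}^{m-1}(1-aq^i)$ for integers $m\ge0$. *)

(* Defs.v *)
From HB Require Import structures.
From Stdlib Require Import Reals ClassicalEpsilon FunctionalExtensionality.
From mathcomp Require Import all_boot all_order all_algebra.

Set Implicit Arguments.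
Unset Strict Implicit.
Unset Printing Implicit Defensive.

(* R_scope and ring_scope share the key %R; give Stdlib's R_scope the key %Re *)
Delimit Scope R_scope with Re.

Definition Req_bool (x y : R) : bool := if Req_EM_T x y then true else false.
Lemma Req_boolP : Equality.axiom Req_bool.
Proof. move=> x y; rewrite /Req_bool; case: Req_EM_T => h; by constructor. Qed.
HB.instance Definition _ := hasDecEq.Build R Req_boolP.

Definition R_find (P : pred R) (n : nat) : option R :=
  match excluded_middle_informative (exists x, P x) with
  | left h => Some (proj1_sig (constructive_indefinite_description _ h))
  | right _ => None
  end.
Lemma R_find_correct P n x : R_find P n = Some x -> P x.
Proof.
rewrite /R_find; case: excluded_middle_informative => // h [<-].
exact: proj2_sig (constructive_indefinite_description _ h).
Qed.
Lemma R_find_complete (P : pred R) : (exists x, P x) -> exists n, R_find P n.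
Proof. move=> h; exists 0%N; rewrite /R_find; by case: excluded_middle_informative. Qed.
Lemma R_find_ext (P Q : pred R) : P =1 Q -> R_find P =1 R_find Q.
Proof. move=> h n; have -> : P = Q by apply: functional_extensionality. by []. Qed.
HB.instance Definition _ :=
  hasChoice.Build R R_find_correct R_find_complete R_find_ext.

Lemma R_addA : ssrfun.associative Rplus. Proof. move=> x y z; rewrite Rplus_assoc //. Qed.
Lemma R_addC : ssrfun.commutative Rplus. Proof. exact: Rplus_comm. Qed.
Lemma R_add0 : ssrfun.left_id R0 Rplus. Proof. exact: Rplus_0_l. Qed.
Lemma R_addN : ssrfun.left_inverse R0 Ropp Rplus. Proof. exact: Rplus_opp_l. Qed.
HB.instance Definition _ := GRing.isZmodule.Build R R_addA R_addC R_add0 R_addN.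

Lemma R_mulA : ssrfun.associative Rmult. Proof. move=> x y z; rewrite Rmult_assoc //. Qed.
Lemma R_mulC : ssrfun.commutative Rmult. Proof. exact: Rmult_comm. Qed.
Lemma R_mul1 : ssrfun.left_id R1 Rmult. Proof. exact: Rmult_1_l. Qed.
Lemma R_mulDl : ssrfun.left_distributive Rmult Rplus. Proof. move=> x y z; exact: Rmult_plus_distr_r. Qed.
Lemma R_one_neq0 : (R1 : R) != R0.
Proof. apply/eqP; exact: R1_neq_R0. Qed.
HB.instance Definition _ :=
  GRing.Zmodule_isComNzRing.Build R R_mulA R_mulC R_mul1 R_mulDl R_one_neq0.

Fixpoint qpoch (a q : R) (m : nat) : R :=
  match m with
  | O => R1
  | S m' => (qpoch a q m' * (1 - a * q ^ m'))%Re
  end.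

(* Main.v *)
Require Import Defs.
From HB Require Import structures.
From Stdlib Require Import Reals Lra.
From mathcomp Require Import all_boot all_order all_algebra.
Import GRing.Theory.

Lemma mulRE (x y : R) : GRing.mul x y = Rmult x y. Proof. by []. Qed.
Lemma addRE (x y : R) : GRing.add x y = Rplus x y. Proof. by []. Qed.
Lemma oppRE (x : R) : GRing.opp x = Ropp x. Proof. by []. Qed.
Lemma oneRE : (1%R : R) = R1. Proof. by []. Qed.
Lemma zeroRE : (0%R : R) = R0. Proof. by []. Qed.
Lemma expRE (x : R) n : GRing.exp x n = pow x n.
Proof. elim: n => [|n IH]; first by []. by rewrite exprS IH mulRE. Qed.

Lemma qpoch_add (a q : R) j k :
  qpoch a q (j + k) = (qpoch a q k * qpoch (a * q ^ k) q j)%Re.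
Proof.
elim: j => [|j IH] /=; first by rewrite add0n Rmult_1_r.
rewrite IH pow_add. ring.
Qed.

Lemma qpoch_shift (a q y : R) k j : (q ^ k * y = 1)%Re ->
  qpoch (a * q ^ k) q j = ((q ^ k) ^ j * (\prod_(i < j) (y - a * pow q i))%R)%Re.
Proof.
move=> Hy; elim: j => [|j IH] /=; first by rewrite big_ord0 Rmult_1_l.
rewrite big_ord_recr /= IH !mulRE addRE oppRE.
have E : (1 - a * q ^ k * q ^ j = q ^ k * (y + - (a * q ^ j)))%Re.
  rewrite Rmult_plus_distr_l Hy. ring.
rewrite E. set P := (\prod_(i < j) _)%R. ring.
Qed.

Lemma binC2 m : INR 'C(m.+1, 2) = (INR m * (INR m + 1) / 2)%Re.
Proof.
elim: m => [|m IH]; first by rewrite /=; field.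
rewrite binS bin1 plus_INR IH S_INR; field.
Qed.

Definition ee (alpha : R) (m : nat) : R := (- INR 'C(m.+1, 2) - alpha * INR m)%Re.

Lemma expo (q alpha : R) j k : (0 < q)%Re ->
  (Rpower q (- INR 'C(j + k + 1, 2) - alpha * INR (j + k)) * (q ^ k) ^ j
   = Rpower q (ee alpha j) * Rpower q (ee alpha k))%Re.
Proof.
move=> q0; rewrite -pow_mult -Rpower_pow // -!Rpower_plus; f_equal.
rewrite /ee addn1 !binC2 plus_INR mult_INR; field.
Qed.

Lemma VP (f : nat -> nat -> R) N :
  (\prod_(i < N) \prod_(j < N) (if (i < j)%N then f i j else 1)
   = \prod_(j < N) \prod_(i < j) f i j)%R.
Proof.
elim: N => [|N IH]; first by rewrite !big_ord0.
rewrite big_ord_recr /= [RHS]big_ord_recr /= -IH.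
rewrite [X in (_ * X)%R]big1 => [|j _]; last by rewrite ltnNge -ltnS ltn_ord.
under eq_bigr => i _ do rewrite big_ord_recr /= (ltn_ord i).
by rewrite big_split /= mulr1.
Qed.

Lemma RQ (q : R) j : (\prod_(i < j) (1 - pow q (j - i)))%R = qpoch q q j.
Proof.
elim: j => [|j IH]; first by rewrite big_ord0.
rewrite big_ord_recl /=.
under eq_bigr => i _ do rewrite /bump /= add1n subSS.
rewrite IH mulRE addRE oppRE /= oneRE. ring.
Qed.

Lemma VY (q : R) j : q <> 0%Re ->
  (\prod_(i < j) (Rinv (pow q j) - Rinv (pow q i)))%R
  = ((/ q ^ j) ^ j * qpoch q q j)%Re.
Proof.
move=> q0; rewrite -RQ.
transitivity (\prod_(i < j) (Rinv (pow q j) * (1 - pow q (j - i))))%R.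
  apply: eq_bigr => i _.
  have H : (q ^ j = q ^ i * q ^ (j - i))%Re by rewrite -pow_add plusE subnKC // ltnW.
  rewrite !mulRE !addRE !oppRE !oneRE H; match goal with |- ?x = ?y => change (@eq R x y) end; field.
  by split; apply: pow_nonzero.
by rewrite big_split /= prodr_const card_ord expRE.
Qed.

Lemma size_g (f : nat -> R) j :
  size (\prod_(i < j) ('X - (f i)%:P) : {poly R})%R = j.+1.
Proof. by rewrite size_prod_XsubC [index_enum _]unlock -enumT size_enum_ord. Qed.

Lemma entry (a q alpha : R) j k : (0 < q)%Re ->
  (qpoch a q (j + k) * Rpower q (- INR 'C(j + k + 1, 2) - alpha * INR (j + k)))%Re
  = (Rpower q (ee alpha j) * (\prod_(i < j) (Rinv (pow q k) - a * pow q i))%R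
     * (qpoch a q k * Rpower q (ee alpha k)))%Re.
Proof.
move=> q0.
have qk : (q ^ k <> 0)%Re by apply: pow_nonzero; lra.
rewrite qpoch_add (@qpoch_shift a q (Rinv (q ^ k))); last by field.
set P := (\prod_(i < j) _)%R.
transitivity (qpoch a q k * P * (Rpower q (- INR 'C(j + k + 1, 2) - alpha * INR (j + k)) * (q ^ k) ^ j))%Re.
  ring.
rewrite expo //; ring.
Qed.

Lemma prodY (q alpha : R) N : (0 < q)%Re ->
  (\prod_(m < N.+1) Rpower q (2 * ee alpha m - INR m * INR m))%R
  = Rpower q (- (INR N * (INR N + 1) * (4 * INR N + 6 * alpha + 5) / 6)).
Proof.
move=> q0; elim: N => [|N IH].
  rewrite big_ord_recr big_ord0 /= mul1r; f_equal; rewrite /ee binC2 /=; field.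
rewrite big_ord_recr /= -/(INR N.+1) IH mulRE -Rpower_plus; f_equal.
rewrite /ee binC2 !S_INR; field.
Qed.

Theorem mainTheorem8 (q alpha : R) (n : nat)
  (hq0 : (0 < q)%Re) (hq1 : (q < 1)%Re) (halpha : (-1 < alpha)%Re) :
  (\det (\matrix_(j < n.+1, k < n.+1)
          (qpoch (Rpower q (alpha + 1)) q (j + k)
           * Rpower q (- INR 'C(j + k + 1, 2) - alpha * INR (j + k)))%Re))%R
  = Rdiv
      (\prod_(m < n.+1) (qpoch q q m * qpoch (Rpower q (alpha + 1)) q m)%Re)%R
      (Rpower q (INR n * (INR n + 1) * (4 * INR n + 6 * alpha + 5) / 6)%Re).
Proof.
set a := Rpower q (alpha + 1).
have q0 : q <> 0%Re by lra.
pose y := (\row_(k < n.+1) Rinv (pow q k))%R.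
pose g (j : nat) : {poly R} := (\prod_(i < j) ('X - (Rmult a (pow q i))%:P))%R.
pose L := (\matrix_(j < n.+1, i < n.+1) (g j)`_i)%R.
pose d1 := (\row_(j < n.+1) Rpower q (ee alpha j))%R.
pose d2 := (\row_(k < n.+1) (qpoch a q k * Rpower q (ee alpha k))%Re)%R.
rewrite (_ : \matrix_(j < n.+1, k < n.+1) _ = diag_mx d1 *m (L *m Vandermonde n.+1 y) *m diag_mx d2)%R; last first.
  apply/matrixP => j k; rewrite mul_mx_diag mul_diag_mx !mxE.
  rewrite entry //.
  have HE : (\sum_j0 L j j0 * Vandermonde n.+1 y j0 k)%R
            = (\prod_(i < j) (Rinv (pow q k) - a * pow q i))%R.
    under eq_bigr => i _ do rewrite !mxE.
    rewrite -(horner_coef_wide _ (p := g j)); last by rewrite /g (size_g (fun i => Rmult a (pow q i))) ltn_ord.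
    by rewrite /g horner_prod; apply: eq_bigr => i _; rewrite hornerXsubC.
  by rewrite HE.
have dL : (\det L = 1)%R.
  rewrite det_trig; last first.
    apply/is_trig_mxP => i k lt; rewrite mxE nth_default //.
    by rewrite /g (size_g (fun i => Rmult a (pow q i))).
  apply: big1 => i _; rewrite mxE.
  have := monic_prod_XsubC (index_enum 'I_i) xpredT (fun i => Rmult a (pow q i)).
  move/monicP; rewrite lead_coefE (size_g (fun i => Rmult a (pow q i))) /=.
  by [].
rewrite !det_mulmx !det_diag det_Vandermonde dL mul1r.
under eq_bigr => i _ do rewrite mxE.
under [X in (_ * X * _)%R]eq_bigr => i _ do under eq_bigr => j _ do rewrite !mxE.
under [X in (_ * X)%R]eq_bigr => i _ do rewrite mxE.
under [X in (_ * X * _)%R]eq_bigr => i _ do rewrite big_mkcond.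
rewrite (VP (fun i j => (Rinv (pow q j) - Rinv (pow q i))%R)).
under [X in (_ * X * _)%R]eq_bigr => j _ do rewrite VY //.
rewrite -!big_split /=.
rewrite (eq_bigr (fun m : 'I_n.+1 => (qpoch q q m * qpoch a q m)
                   * Rpower q (2 * ee alpha m - INR m * INR m))%R); last first.
  move=> m _; rewrite !mulRE; match goal with |- ?x = ?y => change (@eq R x y) end.
  have -> : ((/ q ^ m) ^ m = Rpower q (- (INR m * INR m)))%Re.
    by rewrite Rpower_Ropp -mult_INR Rpower_pow // pow_mult pow_inv.
  rewrite /Rminus Rpower_plus.
  rewrite (_ : 2 * ee alpha m = ee alpha m + ee alpha m)%Re; last ring.
  rewrite Rpower_plus; ring.
rewrite big_split /= prodY //.
rewrite /Rdiv -Rpower_Ropp.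
done.
Qed.
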